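(* For every $n\geq1$ and every $0<\alpha\leq 2$, $d_\alpha$ is a homogeneous distance on $\mathbb H^n$.
   Context: $\mathbb H^n=\mathbb R^{2n+1}=\{(x,y,z): x,y\in\mathbb R^n, z\in\mathbb R\}$ with the Euclidean topology and group law $(x,y,z)\cdot(x',y',z')=(x+x',y+y',z+z'+\tfrac12\langle x,y'\rangle-\tfrac12\langle y,x'\rangle)$. Dilations: $\delta_\lambda(x,y,z)=(\lambda x,\lambda y,\lambda^2 z)$. $B_\alpha$ is the closed Euclidean ball of radius $\alpha$ centered at $0$ in $\mathbb R^{2n+1}$, and $d_\alpha(p,q)=\inf\{r>0:\delta_{1/r}(p^{-1}\cdot q)\in B_\alpha\}$. A distance $d$ on $\mathbb H^n$ is homogeneous if it induces the Euclidean topology, is left invariant ($d(p\cdot q,p\cdot q')=d(q,q')$) and satisfies $d(\delta_\lambda p,\delta_\lambda q)=\lambda d(p,q)$ for all $\lambda>0$. *)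

(* Defs.v *)
From Stdlib Require Import Reals Lra Lia Arith ClassicalEpsilon.
Open Scope R_scope.

Definition Fin (n : nat) : Type := {i : nat | (i < n)%nat}.

Record Heis (n : nat) : Type := mkHeis {
  hx : Fin n -> R;
  hy : Fin n -> R;
  hz : R }.
Arguments mkHeis {n}.
Arguments hx {n}.
Arguments hy {n}.
Arguments hz {n}.

Definition ext {n : nat} (v : Fin n -> R) : nat -> R :=
  fun i => match lt_dec i n with
           | left h => v (exist _ i h)
           | right _ => 0
           end.

Fixpoint sumR (f : nat -> R) (k : nat) : R :=
  match k with
  | O => 0
  | S k' => sumR f k' + f k'
  end.

Definition inner {n : nat} (u v : Fin n -> R) : R :=
  sumR (fun i => ext u i * ext v i) n.

Definition hmul {n : nat} (p q : Heis n) : Heis n :=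
  mkHeis (fun i => hx p i + hx q i)
         (fun i => hy p i + hy q i)
         (hz p + hz q + / 2 * inner (hx p) (hy q) - / 2 * inner (hy p) (hx q)).

Definition hinv {n : nat} (p : Heis n) : Heis n :=
  mkHeis (fun i => - hx p i) (fun i => - hy p i) (- hz p).

Definition dil {n : nat} (l : R) (p : Heis n) : Heis n :=
  mkHeis (fun i => l * hx p i) (fun i => l * hy p i) (l ^ 2 * hz p).

Definition enorm {n : nat} (p : Heis n) : R :=
  sqrt (inner (hx p) (hx p) + inner (hy p) (hy p) + hz p ^ 2).

Definition edist {n : nat} (p q : Heis n) : R :=
  enorm (mkHeis (fun i => hx q i - hx p i) (fun i => hy q i - hy p i) (hz q - hz p)).

Definition Ball {n : nat} (a : R) (p : Heis n) : Prop := enorm p <= a.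

Definition is_glb (E : R -> Prop) (m : R) : Prop :=
  (forall x, E x -> m <= x) /\ (forall b, (forall x, E x -> b <= x) -> b <= m).

Definition Rinf (E : R -> Prop) : R :=
  epsilon (inhabits 0) (is_glb E).

Definition d_alpha (n : nat) (a : R) (p q : Heis n) : R :=
  Rinf (fun r => 0 < r /\ Ball a (dil (/ r) (hmul (hinv p) q))).

Definition is_distance {T : Type} (d : T -> T -> R) : Prop :=
  (forall p q, 0 <= d p q) /\
  (forall p q, d p q = 0 <-> p = q) /\
  (forall p q, d p q = d q p) /\
  (forall p q r, d p r <= d p q + d q r).

Definition open_for {T : Type} (d : T -> T -> R) (U : T -> Prop) : Prop :=
  forall p, U p -> exists eps, 0 < eps /\ forall q, d p q < eps -> U q.

Definition homogeneous_distance (n : nat) (d : Heis n -> Heis n -> R) : Prop :=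
  is_distance d /\
  (forall U : Heis n -> Prop, open_for d U <-> open_for (@edist n) U) /\
  (forall p q q', d (hmul p q) (hmul p q') = d q q') /\
  (forall l p q, 0 < l -> d (dil l p) (dil l q) = l * d p q).

(* Main.v *)
Require Import Defs.
From Stdlib Require Import Reals.
From Stdlib Require Import Lra Lia Psatz ClassicalEpsilon FunctionalExtensionality PropExtensionality ProofIrrelevance Arith.
Open Scope R_scope.

Lemma sumR_ext f g k : (forall i, (i < k)%nat -> f i = g i) -> sumR f k = sumR g k.
Proof. induction k; simpl; intros H; [reflexivity|]. rewrite IHk, H; auto. Qed.
Lemma sumR_add f g k : sumR (fun i => f i + g i) k = sumR f k + sumR g k.
Proof. induction k; simpl; [lra|]. rewrite IHk; lra. Qed.
Lemma sumR_scal c f k : sumR (fun i => c * f i) k = c * sumR f k.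
Proof. induction k; simpl; [lra|]. rewrite IHk; lra. Qed.
Lemma sumR_opp f k : sumR (fun i => - f i) k = - sumR f k.
Proof. induction k; simpl; [lra|]. rewrite IHk; lra. Qed.
Lemma sumR_nonneg f k : (forall i, 0 <= f i) -> 0 <= sumR f k.
Proof. induction k; simpl; intros; [lra|]. specialize (IHk H); specialize (H k); lra. Qed.
Lemma sumR_term f k i : (forall i, 0 <= f i) -> (i < k)%nat -> f i <= sumR f k.
Proof. induction k; simpl; intros H Hi; [lia|].
  assert (0 <= sumR f k) by (apply sumR_nonneg; auto).
  destruct (Nat.eq_dec i k). subst; specialize (H k); lra.
  assert (i < k)%nat by lia. specialize (IHk H H1). specialize (H k). lra. Qed.

Lemma cs_step A F G a f g : 0 <= F -> 0 <= G -> 0 <= f -> 0 <= g -> A*A <= F*G -> a*a <= f*g ->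
  (A + a)*(A+a) <= (F + f)*(G+g).
Proof. intros. assert (2*A*a <= F*g + f*G).
  { assert (HP: 0 <= F*g + f*G) by nra.
    assert (H5: 4*(A*A)*(a*a) <= 4*(F*G)*(f*g)).
    { apply Rmult_le_compat; try nra. }
    assert (H6: (F*g+f*G)*(F*g+f*G) - 4*(F*G)*(f*g) = (F*g - f*G)*(F*g-f*G)) by ring.
    assert (H7: 0 <= (F*g - f*G)*(F*g-f*G)) by (pose proof (Rle_0_sqr (F*g-f*G)); unfold Rsqr in *; lra).
    destruct (Rle_dec (2*A*a) 0); [lra|].
    apply Rnot_le_lt in n.
    destruct (Rle_dec (2*A*a) (F*g+f*G)); [auto|].
    apply Rnot_le_lt in n0.
    assert ((F*g+f*G)*(F*g+f*G) < (2*A*a)*(2*A*a)) by (apply Rmult_le_0_lt_compat; lra).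
    nra. }
  nra. Qed.

Lemma CS2 f1 f2 g1 g2 k :
  (sumR (fun i => f1 i * g1 i + f2 i * g2 i) k) * (sumR (fun i => f1 i * g1 i + f2 i * g2 i) k) <=
  sumR (fun i => f1 i * f1 i + f2 i * f2 i) k * sumR (fun i => g1 i * g1 i + g2 i * g2 i) k.
Proof. induction k; [simpl; lra|]. cbn [sumR].
  apply cs_step; try (apply sumR_nonneg; intros; nra); try nra.
  pose proof (Rle_0_sqr (f1 k * g2 k - f2 k * g1 k)); unfold Rsqr in *; nra. Qed.

Section Inner.
Variable n : nat.
Implicit Types u v w : Fin n -> R.

Lemma ext_add u v i : ext (fun j => u j + v j) i = ext u i + ext v i.
Proof. unfold ext; destruct lt_dec; lra. Qed.
Lemma ext_sub u v i : ext (fun j => u j - v j) i = ext u i - ext v i.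
Proof. unfold ext; destruct lt_dec; lra. Qed.
Lemma ext_opp u i : ext (fun j => - u j) i = - ext u i.
Proof. unfold ext; destruct lt_dec; lra. Qed.
Lemma ext_scal c u i : ext (fun j => c * u j) i = c * ext u i.
Proof. unfold ext; destruct lt_dec; lra. Qed.

Lemma inner_addl u v w : inner (fun j => u j + v j) w = inner u w + inner v w.
Proof. unfold inner; rewrite <- sumR_add; apply sumR_ext; intros; rewrite ext_add; ring. Qed.
Lemma inner_addr u v w : inner w (fun j => u j + v j) = inner w u + inner w v.
Proof. unfold inner; rewrite <- sumR_add; apply sumR_ext; intros; rewrite ext_add; ring. Qed.
Lemma inner_subl u v w : inner (fun j => u j - v j) w = inner u w - inner v w.
Proof. unfold inner; transitivity (sumR (fun i => ext u i * ext w i + - (ext v i * ext w i)) n);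
  [apply sumR_ext; intros; rewrite ext_sub; ring | rewrite sumR_add, sumR_opp; ring]. Qed.
Lemma inner_subr u v w : inner w (fun j => u j - v j) = inner w u - inner w v.
Proof. unfold inner; transitivity (sumR (fun i => ext w i * ext u i + - (ext w i * ext v i)) n);
  [apply sumR_ext; intros; rewrite ext_sub; ring | rewrite sumR_add, sumR_opp; ring]. Qed.
Lemma inner_oppl u w : inner (fun j => - u j) w = - inner u w.
Proof. unfold inner; rewrite <- sumR_opp; apply sumR_ext; intros; rewrite ext_opp; ring. Qed.
Lemma inner_oppr u w : inner w (fun j => - u j) = - inner w u.
Proof. unfold inner; rewrite <- sumR_opp; apply sumR_ext; intros; rewrite ext_opp; ring. Qed.
Lemma inner_scall c u w : inner (fun j => c * u j) w = c * inner u w.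
Proof. unfold inner; rewrite <- sumR_scal; apply sumR_ext; intros; rewrite ext_scal; ring. Qed.
Lemma inner_scalr c u w : inner w (fun j => c * u j) = c * inner w u.
Proof. unfold inner; rewrite <- sumR_scal; apply sumR_ext; intros; rewrite ext_scal; ring. Qed.
Lemma inner_sym u v : inner u v = inner v u.
Proof. unfold inner; apply sumR_ext; intros; ring. Qed.
Lemma inner_pos u : 0 <= inner u u.
Proof. unfold inner; apply sumR_nonneg; intros; nra. Qed.
Lemma inner_zero u : inner u u = 0 -> forall j, u j = 0.
Proof. intros H [i Hi].
  assert (ext u i * ext u i <= inner u u) by (apply (sumR_term (fun i => ext u i * ext u i)); auto; intros; nra).
  unfold ext in H0. destruct lt_dec; [|lia].
  replace (exist (fun i => (i < n)%nat) i l) with (exist (fun i => (i < n)%nat) i Hi) in H0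
    by (f_equal; apply proof_irrelevance). nra. Qed.
Lemma inner_zero_r u w : (forall j, u j = 0) -> inner w u = 0.
Proof. intros H; unfold inner. transitivity (sumR (fun _ => 0) n).
  apply sumR_ext; intros; unfold ext; destruct lt_dec; [rewrite H|]; ring.
  clear; induction n as [|k IH]; simpl; lra. Qed.
End Inner.

Lemma sumR_sub f g k : sumR (fun i => f i - g i) k = sumR f k - sumR g k.
Proof. induction k; simpl; [lra|]. rewrite IHk; lra. Qed.

Lemma CS_omega n (X Y X' Y' : Fin n -> R) :
  (inner X Y' - inner Y X') * (inner X Y' - inner Y X') <=
  (inner X X + inner Y Y + inner X' X' + inner Y' Y' - 2 * inner X X' - 2 * inner Y Y')
  * (inner X' X' + inner Y' Y').
Proof.
  pose proof (CS2 (fun i => ext X i - ext X' i) (fun i => ext Y i - ext Y' i)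
                  (fun i => ext Y' i) (fun i => - ext X' i) n) as H.
  assert (E1: inner X Y' - inner Y X' = sumR (fun i => (ext X i - ext X' i) * ext Y' i + (ext Y i - ext Y' i) * - ext X' i) n).
  { unfold inner. rewrite <- sumR_sub. apply sumR_ext; intros; ring. }
  assert (E2: inner X X + inner Y Y + inner X' X' + inner Y' Y' - 2 * inner X X' - 2 * inner Y Y' =
     sumR (fun i => (ext X i - ext X' i) * (ext X i - ext X' i) + (ext Y i - ext Y' i) * (ext Y i - ext Y' i)) n).
  { unfold inner. rewrite <- !sumR_scal, <- !sumR_add, <- !sumR_sub. apply sumR_ext; intros; ring. }
  assert (E3: inner X' X' + inner Y' Y' = sumR (fun i => ext Y' i * ext Y' i + - ext X' i * - ext X' i) n).
  { unfold inner. rewrite <- !sumR_add. apply sumR_ext; intros; ring. }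
  rewrite E1, E2, E3. exact H. Qed.

Lemma D_nonneg n (X Y X' Y' : Fin n -> R) :
  0 <= inner X X + inner Y Y + inner X' X' + inner Y' Y' - 2 * inner X X' - 2 * inner Y Y'.
Proof.
  assert (E2: inner X X + inner Y Y + inner X' X' + inner Y' Y' - 2 * inner X X' - 2 * inner Y Y' =
     sumR (fun i => (ext X i - ext X' i) * (ext X i - ext X' i) + (ext Y i - ext Y' i) * (ext Y i - ext Y' i)) n).
  { unfold inner. rewrite <- !sumR_scal, <- !sumR_add, <- !sumR_sub. apply sumR_ext; intros; ring. }
  rewrite E2; apply sumR_nonneg; intros; apply Rplus_le_le_0_compat; apply Rle_0_sqr. Qed.

Lemma CS1 n (u v : Fin n -> R) : inner u v * inner u v <= inner u u * inner v v.
Proof.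
  pose proof (CS2 (ext u) (fun _ => 0) (ext v) (fun _ => 0) n) as H.
  unfold inner. replace (sumR (fun i => ext u i * ext v i) n) with (sumR (fun i => ext u i * ext v i + 0 * 0) n)
    by (apply sumR_ext; intros; ring).
  replace (sumR (fun i => ext u i * ext u i) n) with (sumR (fun i => ext u i * ext u i + 0 * 0) n)
    by (apply sumR_ext; intros; ring).
  replace (sumR (fun i => ext v i * ext v i) n) with (sumR (fun i => ext v i * ext v i + 0 * 0) n)
    by (apply sumR_ext; intros; ring).
  exact H. Qed.

Lemma jensen s t Z Z' d : 0 <= s -> 0 <= t -> s + t = 1 -> 0 <= Z -> 0 <= Z' -> 0 <= d ->
  (s*s*Z + t*t*Z' + s*t*d) * (s*s*Z + t*t*Z' + s*t*d) <= s*(Z*Z) + t*(Z'*Z') + s*t*(d*d).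
Proof. intros Hs Ht Hst HZ HZ' Hd.
  assert (t = 1 - s) by lra. subst t.
  assert (E: s*(Z*Z) + (1-s)*(Z'*Z') + s*(1-s)*(d*d) - (s*s*Z + (1-s)*(1-s)*Z' + s*(1-s)*d) * (s*s*Z + (1-s)*(1-s)*Z' + s*(1-s)*d)
   = (s*(Z*Z) - s*s*(Z*Z)) + ((1-s)*(Z'*Z') - (1-s)*(1-s)*(Z'*Z')) + s*(1-s)*(d*d)/2
     + (s*s*(1-s)*(1-s)*(Z-Z')*(Z-Z') + s*s*2*s*(1-s)*(Z-d/2)*(Z-d/2) + (1-s)*(1-s)*2*s*(1-s)*(Z'-d/2)*(Z'-d/2))).
  { field. }
  assert (0 <= s*(Z*Z) - s*s*(Z*Z)) by (replace (s*(Z*Z) - s*s*(Z*Z)) with (s*(1-s)*(Z*Z)) by ring; apply Rmult_le_pos; [repeat apply Rmult_le_pos; lra | apply Rle_0_sqr]).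
  assert (0 <= (1-s)*(Z'*Z') - (1-s)*(1-s)*(Z'*Z')) by (replace ((1-s)*(Z'*Z') - (1-s)*(1-s)*(Z'*Z')) with (s*(1-s)*(Z'*Z')) by ring; apply Rmult_le_pos; [repeat apply Rmult_le_pos; lra | apply Rle_0_sqr]).
  assert (0 <= s*(1-s)*(d*d)/2) by (unfold Rdiv; apply Rmult_le_pos; [apply Rmult_le_pos; [repeat apply Rmult_le_pos; lra | apply Rle_0_sqr]|lra]).
  assert (0 <= s*s*(1-s)*(1-s)*(Z-Z')*(Z-Z')) by (rewrite Rmult_assoc; apply Rmult_le_pos; [repeat apply Rmult_le_pos; lra | apply Rle_0_sqr]).
  assert (0 <= s*s*2*s*(1-s)*(Z-d/2)*(Z-d/2)) by (rewrite Rmult_assoc; apply Rmult_le_pos; [repeat apply Rmult_le_pos; lra | apply Rle_0_sqr]).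
  assert (0 <= (1-s)*(1-s)*2*s*(1-s)*(Z'-d/2)*(Z'-d/2)) by (rewrite Rmult_assoc; apply Rmult_le_pos; [repeat apply Rmult_le_pos; lra | apply Rle_0_sqr]).
  lra. Qed.

Lemma key_real s t A1 A2 C z1 z2 w a :
  0 <= s -> 0 <= t -> s + t = 1 -> 0 < a -> a <= 2 -> 0 <= A1 -> 0 <= A2 ->
  A1 + z1*z1 <= a*a -> A2 + z2*z2 <= a*a ->
  0 <= A1 + A2 - 2*C -> w*w <= (A1 + A2 - 2*C) * A2 ->
  s*s*A1 + t*t*A2 + 2*s*t*C + (s*s*z1 + t*t*z2 + s*t*(w/2)) * (s*s*z1 + t*t*z2 + s*t*(w/2)) <= a*a.
Proof. intros Hs Ht Hst Ha Ha2 HA1 HA2 H1 H2 HD Hw.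
  set (D := A1 + A2 - 2*C) in *.
  set (d := sqrt D).
  assert (Hd: 0 <= d) by apply sqrt_pos.
  assert (Hdd: d*d = D) by (apply sqrt_sqrt; auto).
  assert (Hwd: Rabs (w/2) <= d).
  { rewrite <- sqrt_Rsqr_abs. apply sqrt_le_1_alt. unfold Rsqr.
    assert (A2 <= 4) by nra. assert (D*A2 <= D*4) by (apply Rmult_le_compat_l; auto). lra. }
  set (T := s*s*z1 + t*t*z2 + s*t*(w/2)).
  set (Tp := s*s*Rabs z1 + t*t*Rabs z2 + s*t*d).
  assert (HT: Rabs T <= Tp).
  { unfold T, Tp. eapply Rle_trans; [apply Rabs_triang|].
    eapply Rplus_le_compat; [eapply Rle_trans; [apply Rabs_triang|]; apply Rplus_le_compat|].
    - rewrite Rabs_mult, (Rabs_pos_eq (s*s)) by nra. apply Rle_refl.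
    - rewrite Rabs_mult, (Rabs_pos_eq (t*t)) by nra. apply Rle_refl.
    - rewrite Rabs_mult, (Rabs_pos_eq (s*t)) by nra. apply Rmult_le_compat_l; nra. }
  assert (HT2: T*T <= Tp*Tp).
  { assert (T*T = Rabs T * Rabs T) by (rewrite <- Rabs_mult, Rabs_pos_eq; nra).
    rewrite H. apply Rmult_le_compat; auto; apply Rabs_pos. }
  pose proof (jensen s t (Rabs z1) (Rabs z2) d Hs Ht Hst (Rabs_pos _) (Rabs_pos _) Hd) as J.
  fold Tp in J.
  assert (Rabs z1 * Rabs z1 = z1*z1) by (rewrite <- Rabs_mult, Rabs_pos_eq; nra).
  assert (Rabs z2 * Rabs z2 = z2*z2) by (rewrite <- Rabs_mult, Rabs_pos_eq; nra).
  rewrite H, H0, Hdd in J.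
  assert (EH: s*s*A1 + t*t*A2 + 2*s*t*C = s*A1 + t*A2 - s*t*D).
  { unfold D. replace t with (1-s) by lra. ring. }
  rewrite EH.
  assert (s*(A1 + z1*z1) + t*(A2+z2*z2) <= a*a).
  { replace (a*a) with (s*(a*a) + t*(a*a)) by (replace t with (1-s) by lra; ring).
    apply Rplus_le_compat; apply Rmult_le_compat_l; auto. }
  lra. Qed.


Lemma div_le_iff X Y c : 0 < c -> (X / c <= Y <-> X <= Y * c).
Proof. intros Hc; split; intros H.
  - apply Rmult_le_compat_r with (r:=c) in H; [|lra]. unfold Rdiv in H.
    rewrite Rmult_assoc, Rinv_l, Rmult_1_r in H; lra.
  - apply Rmult_le_compat_r with (r:=/c) in H; [|left; apply Rinv_0_lt_compat; lra].
    rewrite Rmult_assoc, Rinv_r, Rmult_1_r in H; [|lra]. exact H. Qed.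

Lemma le_div_iff X Y c : 0 < c -> (Y <= X / c <-> Y * c <= X).
Proof. intros Hc; split; intros H.
  - apply Rmult_le_compat_r with (r:=c) in H; [|lra]. unfold Rdiv in H.
    rewrite Rmult_assoc, Rinv_l, Rmult_1_r in H; lra.
  - apply Rmult_le_compat_r with (r:=/c) in H; [|left; apply Rinv_0_lt_compat; lra].
    rewrite Rmult_assoc, Rinv_r, Rmult_1_r in H; [|lra]. exact H. Qed.

Lemma glb_exists (E : R -> Prop) : (exists x, E x) -> (forall x, E x -> 0 <= x) -> exists m, is_glb E m.
Proof. intros [x0 Hx0] Hlb.
  destruct (completeness (fun x => E (-x))) as [m [Hm1 Hm2]].
  - exists 0. intros y Hy. specialize (Hlb _ Hy). lra.
  - exists (-x0). rewrite Ropp_involutive. auto.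
  - exists (-m). split.
    + intros x Hx. assert (-x <= m) by (apply Hm1; rewrite Ropp_involutive; auto). lra.
    + intros b Hb. assert (m <= -b).
      { apply Hm2. intros y Hy. specialize (Hb _ Hy). lra. } lra. Qed.

Lemma glb_unique E m1 m2 : is_glb E m1 -> is_glb E m2 -> m1 = m2.
Proof. intros [H1 H2] [H3 H4]. apply Rle_antisym; [apply H4|apply H2]; auto. Qed.

Lemma Rinf_spec E : (exists m, is_glb E m) -> is_glb E (Rinf E).
Proof. intros H. unfold Rinf. apply epsilon_spec. exact H. Qed.

Section NfSec.
Variable a : R.
Hypothesis Ha : 0 < a.

Definition Sset (A z2 r : R) : Prop := 0 < r /\ A / r^2 + z2 / r^4 <= a^2.
Definition Nf A z2 := Rinf (Sset A z2).

Lemma Sset_iff A z2 r : 0 < r -> (Sset A z2 r <-> A * r^2 + z2 <= a^2 * r^4).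
Proof. intros Hr. unfold Sset.
  replace (A / r^2 + z2 / r^4) with ((A*r^2 + z2) / r^4) by (field; lra).
  rewrite div_le_iff by (apply pow_lt; lra). split; [intros [_ H]|]; auto. Qed.

Lemma Sset_up A z2 r r' : 0 <= A -> 0 <= z2 -> Sset A z2 r -> r <= r' -> Sset A z2 r'.
Proof. intros HA Hz [Hr H] Hrr. split; [lra|].
  assert (A / r'^2 <= A / r^2).
  { unfold Rdiv. apply Rmult_le_compat_l; auto. apply Rinv_le_contravar. apply pow_lt; lra.
    apply pow_incr; lra. }
  assert (z2 / r'^4 <= z2 / r^4).
  { unfold Rdiv. apply Rmult_le_compat_l; auto. apply Rinv_le_contravar. apply pow_lt; lra.
    apply pow_incr; lra. }
  lra. Qed.

Lemma Sset_ne A z2 : 0 <= A -> 0 <= z2 -> exists r, Sset A z2 r.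
Proof. intros HA Hz. set (r := 1 + 2*(A+z2)/a^2). assert (Ha2: 0 < a^2) by (apply pow_lt; lra).
  assert (H1: 2*(A+z2) <= a^2 * r).
  { unfold r. replace (a^2 * (1 + 2*(A+z2)/a^2)) with (a^2 + 2*(A+z2)) by (field; lra). lra. }
  assert (Hr1: 1 <= r). { unfold r. assert (0 <= 2*(A+z2)/a^2) by (unfold Rdiv; apply Rmult_le_pos; [lra|left; apply Rinv_0_lt_compat; lra]). lra. }
  exists r. apply Sset_iff; [lra|].
  assert (r <= r^2) by nra. assert (r^2 <= r^4) by nra. assert (r^2 * r <= r^4) by nra.
  assert (A * r^2 <= a^2 * r^4 / 2).
  { assert (A*r^2 <= a^2*r/2 * r^2) by (apply Rmult_le_compat_r; nra). nra. }
  assert (z2 <= a^2 * r^4 / 2) by nra. lra. Qed.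

Lemma Sset_pos A z2 x : Sset A z2 x -> 0 <= x.
Proof. intros [H _]; lra. Qed.

Lemma Nf_glb A z2 : 0 <= A -> 0 <= z2 -> is_glb (Sset A z2) (Nf A z2).
Proof. intros. apply Rinf_spec, glb_exists. apply Sset_ne; auto. apply Sset_pos. Qed.

Lemma Nf_lt A z2 r : 0 <= A -> 0 <= z2 -> Nf A z2 < r -> Sset A z2 r.
Proof. intros HA Hz H. destruct (Nf_glb A z2 HA Hz) as [H1 H2].
  destruct (classic (exists x, Sset A z2 x /\ x <= r)) as [[x [Hx Hxr]]|Hn].
  - eapply Sset_up; eauto.
  - exfalso. assert (r <= Nf A z2); [|lra]. apply H2. intros x Hx.
    destruct (Rle_dec x r); [exfalso; apply Hn; eauto|lra]. Qed.

Lemma Nf_le A z2 r : 0 <= A -> 0 <= z2 -> Sset A z2 r -> Nf A z2 <= r.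
Proof. intros HA Hz H. destruct (Nf_glb A z2 HA Hz) as [H1 H2]. auto. Qed.

Lemma Nf_nonneg A z2 : 0 <= A -> 0 <= z2 -> 0 <= Nf A z2.
Proof. intros HA Hz. destruct (Nf_glb A z2 HA Hz) as [H1 H2]. apply H2. apply Sset_pos. Qed.

Lemma Nf_le_iff A z2 r : 0 <= A -> 0 <= z2 -> (Nf A z2 <= r <-> forall r', r < r' -> Sset A z2 r').
Proof. intros HA Hz; split.
  - intros H r' Hr'. apply Nf_lt; auto; lra.
  - intros H. destruct (Rle_dec (Nf A z2) r) as [|Hn]; auto. exfalso.
    apply Rnot_le_lt in Hn. assert (Nf A z2 <= (r + Nf A z2)/2) by (apply Nf_le; auto; apply H; lra). lra. Qed.

Lemma Nf_bound A z2 r : 0 <= A -> 0 <= z2 -> Nf A z2 < r -> A <= a^2 * r^2 /\ z2 <= a^2 * r^4.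
Proof. intros HA Hz H. pose proof (Nf_nonneg A z2 HA Hz).
  assert (Hr: 0 < r) by lra.
  apply Nf_lt in H; auto. apply Sset_iff in H; [|lra].
  assert (0 < r^2) by (apply pow_lt; lra).
  assert (0 <= A*r^2) by (apply Rmult_le_pos; lra).
  assert (A * r^2 <= a^2 * r^4) by lra.
  replace (r^4) with (r^2 * r^2) in H3 by ring.
  split; [|lra].
  apply Rmult_le_reg_r with (r^2); auto. nra. Qed.

Lemma Nf_small A z2 r : 0 <= A -> 0 <= z2 -> 0 < r -> A <= a^2*r^2/2 -> z2 <= a^2*r^4/2 -> Nf A z2 <= r.
Proof. intros. apply Nf_le; auto. apply Sset_iff; auto.
  assert (A * r^2 <= a^2*r^2/2 * r^2) by (apply Rmult_le_compat_r; auto; apply pow_le; lra).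
  assert (a^2*r^2/2*r^2 = a^2*r^4/2) by field. lra. Qed.

Lemma Nf_zero A z2 : 0 <= A -> 0 <= z2 -> (Nf A z2 = 0 <-> A = 0 /\ z2 = 0).
Proof. intros HA Hz; split.
  - intros H0.
    assert (Hall: forall r, 0 < r -> r <= 1 -> A <= a^2 * r^2 /\ z2 <= a^2 * r^2).
    { intros r Hr Hr1. destruct (Nf_bound A z2 r HA Hz) as [h1 h2]; [lra|]. split; auto.
      assert (r^4 <= r^2) by (replace (r^4) with (r^2*r^2) by ring; assert (r^2 <= 1) by nra; assert (0 <= r^2) by nra; nra).
      assert (0 < a^2) by (apply pow_lt; lra). nra. }
    assert (forall X, 0 <= X -> (forall r, 0 < r -> r <= 1 -> X <= a^2 * r^2) -> X = 0).
    { intros X HX HXr. destruct (Req_dec X 0); auto. exfalso.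
      set (r := Rmin 1 (X / (a^2 + 1))).
      assert (0 < a^2) by (apply pow_lt; lra).
      assert (0 < X / (a^2+1)) by (apply Rdiv_lt_0_compat; lra).
      assert (Hr0: 0 < r) by (unfold r; apply Rmin_glb_lt; lra).
      assert (Hr1: r <= 1) by apply Rmin_l.
      assert (Hr2: r <= X/(a^2+1)) by apply Rmin_r.
      specialize (HXr r Hr0 Hr1).
      assert (r * (a^2+1) <= X).
      { assert (X/(a^2+1)*(a^2+1) = X) by (field; lra).
        assert (r * (a^2+1) <= X/(a^2+1)*(a^2+1)) by (apply Rmult_le_compat_r; lra). lra. }
      assert (a^2 * r^2 <= a^2 * r) by (apply Rmult_le_compat_l; nra).
      nra. }
    split; apply H; auto; intros r Hr Hr1; apply Hall; auto.
  - intros [-> ->]. apply Rle_antisym; [|apply Nf_nonneg; lra].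
    apply Nf_le_iff; try lra. intros r' Hr'. apply Sset_iff; [lra|].
    assert (0 <= a^2 * r'^4) by (apply Rmult_le_pos; apply pow_le; lra). lra. Qed.

Lemma Nf_scale A z2 l : 0 <= A -> 0 <= z2 -> 0 < l -> Nf (l^2 * A) (l^4 * z2) = l * Nf A z2.
Proof. intros HA Hz Hl.
  assert (HA': 0 <= l^2*A) by (apply Rmult_le_pos; auto; apply pow_le; lra).
  assert (Hz': 0 <= l^4*z2) by (apply Rmult_le_pos; auto; apply pow_le; lra).
  apply glb_unique with (Sset (l^2*A) (l^4*z2)); [apply Nf_glb; auto|].
  destruct (Nf_glb A z2 HA Hz) as [H1 H2].
  assert (Eq: forall r, Sset (l^2*A) (l^4*z2) r <-> Sset A z2 (r/l)).
  { intros r. unfold Sset.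
    replace (l^2*A/r^2 + l^4*z2/r^4) with (A/(r/l)^2 + z2/(r/l)^4).
    - split; intros [h1 h2]; split; auto.
      + apply Rdiv_lt_0_compat; auto.
      + apply Rmult_lt_reg_r with (/l); [apply Rinv_0_lt_compat; auto|]. rewrite Rmult_0_l. exact h1.
    - destruct (Req_dec r 0) as [->|Hr0].
      + unfold Rdiv. rewrite Rmult_0_l. simpl. rewrite !Rmult_0_l, Rinv_0. ring.
      + field; lra. }
  split.
  - intros x Hx. apply Eq in Hx. apply H1 in Hx. apply le_div_iff in Hx; auto. lra.
  - intros b Hb. assert (b / l <= Nf A z2).
    { apply H2. intros y Hy. assert (Sset (l^2*A) (l^4*z2) (l*y)).
      { apply Eq. replace (l*y/l) with y by (field; lra). auto. }
      apply Hb in H. apply div_le_iff; auto. lra. }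
    apply div_le_iff in H; auto. lra. Qed.

End NfSec.


Ltac iexp := cbn [hmul hinv dil hx hy hz] in *;
  repeat first [rewrite inner_addl | rewrite inner_addr | rewrite inner_subl | rewrite inner_subr
               | rewrite inner_oppl | rewrite inner_oppr | rewrite inner_scall | rewrite inner_scalr].
Ltac isym := repeat match goal with |- context [inner (hy ?a) (hx ?b)] => rewrite (inner_sym _ (hy a) (hx b)) end.

Definition Aof {n} (w : Heis n) := inner (hx w) (hx w) + inner (hy w) (hy w).
Definition Nw {n} a (w : Heis n) := Nf a (Aof w) (hz w ^ 2).

Lemma Aof_nonneg {n} (w : Heis n) : 0 <= Aof w.
Proof. unfold Aof; pose proof (inner_pos _ (hx w)); pose proof (inner_pos _ (hy w)); lra. Qed.
Lemma sq_nonneg x : 0 <= x ^ 2.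
Proof. apply pow2_ge_0. Qed.

Lemma sqrt_le_iff Q a : 0 <= Q -> 0 < a -> (sqrt Q <= a <-> Q <= a^2).
Proof. intros HQ Ha; split; intros H.
  - pose proof (sqrt_sqrt Q HQ). pose proof (sqrt_pos Q).
    assert (sqrt Q * sqrt Q <= a * a) by (apply Rmult_le_compat; auto). simpl; lra.
  - rewrite <- (sqrt_pow2 a) by lra. apply sqrt_le_1_alt; auto. Qed.

Lemma d_eq n a p q : 0 < a -> d_alpha n a p q = Nw a (hmul (hinv p) q).
Proof. intros Ha. unfold d_alpha, Nw, Nf. f_equal. apply functional_extensionality; intro r.
  apply propositional_extensionality. unfold Sset, Ball, enorm.
  set (w := hmul (hinv p) q). cbn [dil hx hy hz]. rewrite !inner_scall, !inner_scalr.
  split; intros [Hr H]; split; auto.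
  - apply sqrt_le_iff in H; auto.
    + unfold Aof. replace ((inner (hx w) (hx w) + inner (hy w) (hy w)) / r ^ 2 + hz w ^ 2 / r ^ 4)
        with (/ r * (/ r * inner (hx w) (hx w)) + / r * (/ r * inner (hy w) (hy w)) + ((/ r) ^ 2 * hz w) ^ 2)
        by (field; lra). auto.
    + pose proof (inner_pos _ (hx w)); pose proof (inner_pos _ (hy w)).
      assert (0 <= ((/ r) ^ 2 * hz w) ^ 2) by apply sq_nonneg.
      assert (0 < /r) by (apply Rinv_0_lt_compat; lra). nra.
  - apply sqrt_le_iff; auto.
    + pose proof (inner_pos _ (hx w)); pose proof (inner_pos _ (hy w)).
      assert (0 <= ((/ r) ^ 2 * hz w) ^ 2) by apply sq_nonneg.
      assert (0 < /r) by (apply Rinv_0_lt_compat; lra). nra.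
    + unfold Aof in H. replace (/ r * (/ r * inner (hx w) (hx w)) + / r * (/ r * inner (hy w) (hy w)) + ((/ r) ^ 2 * hz w) ^ 2)
        with ((inner (hx w) (hx w) + inner (hy w) (hy w)) / r ^ 2 + hz w ^ 2 / r ^ 4)
        by (field; lra). auto. Qed.

Lemma Aof_mul {n} (w1 w2 : Heis n) : Aof (hmul w1 w2) =
  Aof w1 + Aof w2 + 2 * (inner (hx w1) (hx w2) + inner (hy w1) (hy w2)).
Proof. unfold Aof. iexp. rewrite (inner_sym _ (hx w2) (hx w1)), (inner_sym _ (hy w2) (hy w1)). lra. Qed.

Lemma assoc_A {n} (p q r : Heis n) :
  Aof (hmul (hinv p) r) = Aof (hmul (hmul (hinv p) q) (hmul (hinv q) r)).
Proof. unfold Aof. iexp. lra. Qed.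
Lemma assoc_z {n} (p q r : Heis n) :
  hz (hmul (hinv p) r) = hz (hmul (hmul (hinv p) q) (hmul (hinv q) r)).
Proof. iexp. isym. lra. Qed.


Lemma prod_real a r1 r2 A1 A2 C z1 z2 w :
  0 < a -> a <= 2 -> 0 < r1 -> 0 < r2 -> 0 <= A1 -> 0 <= A2 ->
  A1/r1^2 + z1^2/r1^4 <= a^2 -> A2/r2^2 + z2^2/r2^4 <= a^2 ->
  0 <= A1/r1^2 + A2/r2^2 - 2*(C/(r1*r2)) ->
  (w/(r1*r2)) * (w/(r1*r2)) <= (A1/r1^2 + A2/r2^2 - 2*(C/(r1*r2))) * (A2/r2^2) ->
  (A1+A2+2*C)/(r1+r2)^2 + (z1+z2+w/2)^2/(r1+r2)^4 <= a^2.
Proof. intros Ha Ha2 Hr1 Hr2 HA1 HA2 H1 H2 HD HW.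
  set (R := r1 + r2).
  set (s := r1/R). set (t := r2/R).
  assert (HR: 0 < R) by (unfold R; lra).
  pose proof (key_real s t (A1/r1^2) (A2/r2^2) (C/(r1*r2)) (z1/r1^2) (z2/r2^2) (w/(r1*r2)) a) as K.
  assert (E1: s*s*(A1/r1^2) + t*t*(A2/r2^2) + 2*s*t*(C/(r1*r2)) = (A1+A2+2*C)/R^2)
    by (unfold s, t; field; lra).
  assert (E2: s*s*(z1/r1^2) + t*t*(z2/r2^2) + s*t*(w/(r1*r2)/2) = (z1+z2+w/2)/R^2)
    by (unfold s, t; field; lra).
  rewrite E1, E2 in K.
  replace ((z1+z2+w/2)^2/R^4) with ((z1+z2+w/2)/R^2 * ((z1+z2+w/2)/R^2)) by (field; lra).
  replace (a^2) with (a*a) by ring.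
  apply K.
  - unfold s; apply Rlt_le, Rdiv_lt_0_compat; lra.
  - unfold t; apply Rlt_le, Rdiv_lt_0_compat; lra.
  - unfold s, t, R; field; lra.
  - auto.
  - auto.
  - apply Rmult_le_pos; auto. left; apply Rinv_0_lt_compat; apply pow_lt; lra.
  - apply Rmult_le_pos; auto. left; apply Rinv_0_lt_compat; apply pow_lt; lra.
  - replace (A1 / r1 ^ 2 + z1 / r1 ^ 2 * (z1 / r1 ^ 2)) with (A1/r1^2 + z1^2/r1^4) by (field; lra). lra.
  - replace (A2 / r2 ^ 2 + z2 / r2 ^ 2 * (z2 / r2 ^ 2)) with (A2/r2^2 + z2^2/r2^4) by (field; lra). lra.
  - auto.
  - auto. Qed.

Lemma Nw_mul n a (w1 w2 : Heis n) : 0 < a -> a <= 2 -> Nw a (hmul w1 w2) <= Nw a w1 + Nw a w2.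
Proof. intros Ha Ha2. unfold Nw.
  pose proof (Aof_nonneg w1) as HA1. pose proof (Aof_nonneg w2) as HA2.
  pose proof (sq_nonneg (hz w1)). pose proof (sq_nonneg (hz w2)).
  pose proof (Nf_nonneg a Ha (Aof w1) _ HA1 H) as HN1.
  pose proof (Nf_nonneg a Ha (Aof w2) _ HA2 H0) as HN2.
  apply (Nf_le_iff a Ha); [apply Aof_nonneg|apply sq_nonneg|].
  intros R' HR'.
  set (N1 := Nf a (Aof w1) (hz w1 ^ 2)) in *.
  set (N2 := Nf a (Aof w2) (hz w2 ^ 2)) in *.
  set (e := R' - N1 - N2).
  assert (L1: N1 < N1 + e/2) by (unfold e; lra).
  assert (L2: N2 < N2 + e/2) by (unfold e; lra).
  assert (S1: Sset a (Aof w1) (hz w1 ^ 2) (N1 + e/2)) by (apply (Nf_lt a Ha); auto).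
  assert (S2: Sset a (Aof w2) (hz w2 ^ 2) (N2 + e/2)) by (apply (Nf_lt a Ha); auto).
  destruct S1 as [Hr1 S1]. destruct S2 as [Hr2 S2].
  set (r1 := N1 + e/2) in *. set (r2 := N2 + e/2) in *.
  replace R' with (r1 + r2) by (unfold r1, r2, e; lra).
  split; [lra|].
  rewrite Aof_mul. cbn [hmul hz hx hy].
  replace (hz w1 + hz w2 + / 2 * inner (hx w1) (hy w2) - / 2 * inner (hy w1) (hx w2))
    with (hz w1 + hz w2 + (inner (hx w1) (hy w2) - inner (hy w1) (hx w2)) / 2) by field.
  apply prod_real; auto.
  - pose proof (D_nonneg _ (fun i => /r1 * hx w1 i) (fun i => /r1 * hy w1 i)
                     (fun i => /r2 * hx w2 i) (fun i => /r2 * hy w2 i)) as HD.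
    rewrite ?inner_scall, ?inner_scalr in HD. unfold Aof.
    replace ((inner (hx w1) (hx w1) + inner (hy w1) (hy w1)) / r1 ^ 2 +
     (inner (hx w2) (hx w2) + inner (hy w2) (hy w2)) / r2 ^ 2 -
     2 * ((inner (hx w1) (hx w2) + inner (hy w1) (hy w2)) / (r1 * r2)))
     with (/ r1 * (/ r1 * inner (hx w1) (hx w1)) + / r1 * (/ r1 * inner (hy w1) (hy w1)) +
      / r2 * (/ r2 * inner (hx w2) (hx w2)) + / r2 * (/ r2 * inner (hy w2) (hy w2)) -
      2 * (/ r1 * (/ r2 * inner (hx w1) (hx w2))) - 2 * (/ r1 * (/ r2 * inner (hy w1) (hy w2))))
     by (field; lra). exact HD.
  - pose proof (CS_omega _ (fun i => /r1 * hx w1 i) (fun i => /r1 * hy w1 i)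
                     (fun i => /r2 * hx w2 i) (fun i => /r2 * hy w2 i)) as HD.
    rewrite ?inner_scall, ?inner_scalr in HD. unfold Aof.
    replace ((inner (hx w1) (hx w1) + inner (hy w1) (hy w1)) / r1 ^ 2 +
     (inner (hx w2) (hx w2) + inner (hy w2) (hy w2)) / r2 ^ 2 -
     2 * ((inner (hx w1) (hx w2) + inner (hy w1) (hy w2)) / (r1 * r2)))
     with (/ r1 * (/ r1 * inner (hx w1) (hx w1)) + / r1 * (/ r1 * inner (hy w1) (hy w1)) +
      / r2 * (/ r2 * inner (hx w2) (hx w2)) + / r2 * (/ r2 * inner (hy w2) (hy w2)) -
      2 * (/ r1 * (/ r2 * inner (hx w1) (hx w2))) - 2 * (/ r1 * (/ r2 * inner (hy w1) (hy w2))))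
     by (field; lra).
    replace ((inner (hx w2) (hx w2) + inner (hy w2) (hy w2)) / r2 ^ 2) with
      (/ r2 * (/ r2 * inner (hx w2) (hx w2)) + / r2 * (/ r2 * inner (hy w2) (hy w2))) by (field; lra).
    replace ((inner (hx w1) (hy w2) - inner (hy w1) (hx w2)) / (r1 * r2)) with
      (/ r1 * (/ r2 * inner (hx w1) (hy w2)) - / r1 * (/ r2 * inner (hy w1) (hx w2))) by (field; lra).
    exact HD. Qed.


Lemma sq3 x y z : (x + y + z)^2 <= 3 * (x^2 + y^2 + z^2).
Proof. pose proof (Rle_0_sqr (x-y)); pose proof (Rle_0_sqr (y-z)); pose proof (Rle_0_sqr (x-z)).
  unfold Rsqr in *. simpl. nra. Qed.

Lemma loc_bounds n (p q : Heis n) :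
  let dx := fun i => hx q i - hx p i in
  let dy := fun i => hy q i - hy p i in
  let E2 := inner dx dx + inner dy dy + (hz q - hz p)^2 in
  let w := hmul (hinv p) q in
  edist p q = sqrt E2 /\ 0 <= E2 /\ Aof w <= E2 /\
  hz w ^ 2 <= (3 + 2 * Aof p) * E2 /\ E2 <= (1 + 2 * Aof p) * Aof w + 3 * hz w ^ 2.
Proof. intros dx dy E2 w.
  assert (FA: Aof w = inner dx dx + inner dy dy).
  { unfold w, Aof, dx, dy. iexp. lra. }
  assert (FZ: hz w = (hz q - hz p) - /2 * inner (hx p) dy + /2 * inner (hy p) dx).
  { unfold w, dx, dy. iexp. isym. lra. }
  pose proof (CS1 _ (hx p) dy) as C1. pose proof (CS1 _ (hy p) dx) as C2.
  pose proof (inner_pos _ dx). pose proof (inner_pos _ dy).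
  pose proof (inner_pos _ (hx p)). pose proof (inner_pos _ (hy p)).
  assert (HP: Aof p = inner (hx p) (hx p) + inner (hy p) (hy p)) by reflexivity.
  assert (C1': inner (hx p) dy * inner (hx p) dy <= Aof p * Aof w).
  { rewrite HP, FA. eapply Rle_trans; [apply C1|]. apply Rmult_le_compat; lra. }
  assert (C2': inner (hy p) dx * inner (hy p) dx <= Aof p * Aof w).
  { rewrite HP, FA. eapply Rle_trans; [apply C2|]. apply Rmult_le_compat; lra. }
  assert (Hdz: 0 <= (hz q - hz p)^2) by apply sq_nonneg.
  assert (HAp: 0 <= Aof p) by apply Aof_nonneg.
  assert (HAw: 0 <= Aof w) by apply Aof_nonneg.
  assert (HAE: Aof w <= E2) by (unfold E2; lra).
  split; [reflexivity|]. split; [unfold E2; lra|]. split; [auto|]. split.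
  - rewrite FZ. eapply Rle_trans; [apply sq3|].
    assert (Aof p * Aof w <= Aof p * E2) by (apply Rmult_le_compat_l; auto).
    assert ((hz q - hz p)^2 <= E2) by (unfold E2; lra).
    simpl. simpl in H3. nra.
  - assert (hz q - hz p = hz w + /2 * inner (hx p) dy - /2 * inner (hy p) dx) by (rewrite FZ; ring).
    pose proof (sq3 (hz w) (/2 * inner (hx p) dy) (- (/2 * inner (hy p) dx))).
    replace (hz w + / 2 * inner (hx p) dy + - (/ 2 * inner (hy p) dx)) with (hz q - hz p) in H4 by (rewrite H3; ring).
    unfold E2. rewrite <- FA. simpl in *. nra. Qed.

Lemma loc_bounds' n (p q : Heis n) : exists E2,
  edist p q = sqrt E2 /\ 0 <= E2 /\ Aof (hmul (hinv p) q) <= E2 /\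
  hz (hmul (hinv p) q) ^ 2 <= (3 + 2 * Aof p) * E2 /\
  E2 <= (1 + 2 * Aof p) * Aof (hmul (hinv p) q) + 3 * hz (hmul (hinv p) q) ^ 2.
Proof. eexists. exact (loc_bounds n p q). Qed.


Lemma topo_fwd n a (p : Heis n) eps : 0 < a -> 0 < eps ->
  exists eta, 0 < eta /\ forall q, edist p q < eta -> Nw a (hmul (hinv p) q) < eps.
Proof. intros Ha He.
  set (r := eps/2). set (K := 3 + 2 * Aof p).
  assert (HK: 0 < K) by (unfold K; pose proof (Aof_nonneg p); lra).
  assert (Hr: 0 < r) by (unfold r; lra).
  assert (Ha2: 0 < a^2) by (apply pow_lt; lra).
  assert (Hr2: 0 < r^2) by (apply pow_lt; lra).
  assert (Hr4: 0 < r^4) by (apply pow_lt; lra).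
  set (c1 := a^2 * r^2 / 2). set (c2 := a^2 * r^4 / (2 * K)).
  assert (Hc1: 0 < c1) by (unfold c1; apply Rdiv_lt_0_compat; [apply Rmult_lt_0_compat|]; lra).
  assert (Hc2: 0 < c2) by (unfold c2; apply Rdiv_lt_0_compat; [apply Rmult_lt_0_compat|]; lra).
  set (eta := Rmin 1 (Rmin c1 c2)).
  assert (He1: eta <= 1) by apply Rmin_l.
  assert (Hec1: eta <= c1) by (eapply Rle_trans; [apply Rmin_r|apply Rmin_l]).
  assert (Hec2: eta <= c2) by (eapply Rle_trans; [apply Rmin_r|apply Rmin_r]).
  assert (He0: 0 < eta) by (unfold eta; repeat apply Rmin_glb_lt; lra).
  exists eta; split; auto. intros q Hq.
  destruct (loc_bounds' n p q) as [E2 [Ed [HE [HA [HZ _]]]]].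
  rewrite Ed in Hq.
  assert (E2 < eta^2).
  { pose proof (sqrt_sqrt E2 HE). pose proof (sqrt_pos E2). simpl. nra. }
  assert (E2 <= eta) by (simpl in H; nra).
  assert (Nw a (hmul (hinv p) q) <= r); [|unfold r in *; lra].
  apply Nf_small; auto; [apply Aof_nonneg|apply sq_nonneg| |].
  - unfold c1 in Hec1; lra.
  - fold K in HZ. assert (K * E2 <= K * c2) by (apply Rmult_le_compat_l; lra).
    assert (K * c2 = a^2 * r^4/2) by (unfold c2; field; lra). lra. Qed.

Lemma topo_bwd n a (p : Heis n) eps : 0 < a -> 0 < eps ->
  exists eta, 0 < eta /\ forall q, Nw a (hmul (hinv p) q) < eta -> edist p q < eps.
Proof. intros Ha He.
  set (M := (4 + 2 * Aof p) * a^2).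
  assert (Ha2: 0 < a^2) by (apply pow_lt; lra).
  assert (HM: 0 < M) by (unfold M; pose proof (Aof_nonneg p); apply Rmult_lt_0_compat; lra).
  set (eta := Rmin 1 (eps / (M+1))).
  assert (He1: eta <= 1) by apply Rmin_l.
  assert (He2: eta <= eps/(M+1)) by apply Rmin_r.
  assert (He0: 0 < eta) by (unfold eta; apply Rmin_glb_lt; [lra|apply Rdiv_lt_0_compat; lra]).
  exists eta; split; auto. intros q Hq.
  destruct (loc_bounds' n p q) as [E2 [Ed [HE [HA [HZ HE2]]]]].
  rewrite Ed.
  destruct (Nf_bound a Ha (Aof (hmul (hinv p) q)) (hz (hmul (hinv p) q) ^ 2) eta) as [B1 B2];
    [apply Aof_nonneg|apply sq_nonneg|exact Hq|].
  assert (eta^4 <= eta^2).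
  { assert (eta*eta <= 1*1) by (apply Rmult_le_compat; lra).
    assert (0 <= eta*eta) by nra.
    replace (eta^4) with ((eta*eta)*(eta*eta)) by ring. replace (eta^2) with ((eta*eta)*1) by ring.
    apply Rmult_le_compat_l; lra. }
  assert (Hp: 0 <= Aof p) by apply Aof_nonneg.
  assert (E2 <= M * eta^2).
  { unfold M. assert ((1 + 2 * Aof p) * Aof (hmul (hinv p) q) <= (1 + 2 * Aof p) * (a^2*eta^2))
      by (apply Rmult_le_compat_l; lra).
    assert (a^2 * eta^4 <= a^2 * eta^2) by (apply Rmult_le_compat_l; lra). nra. }
  assert (eta * (M+1) <= eps).
  { assert (eps / (M+1) * (M+1) = eps) by (field; lra).
    assert (eta * (M+1) <= eps/(M+1) * (M+1)) by (apply Rmult_le_compat_r; lra). lra. }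
  assert (E2 < eps^2).
  { assert (M * eta^2 < (M+1)^2 * eta^2).
    { apply Rmult_lt_compat_r; [apply pow_lt; lra|]. nra. }
    assert ((M+1)^2 * eta^2 <= eps^2).
    { replace ((M+1)^2*eta^2) with ((eta*(M+1))^2) by ring. apply pow_incr. split; [nra|lra]. }
    lra. }
  rewrite <- (sqrt_pow2 eps) by lra. apply sqrt_lt_1_alt. split; auto. Qed.


Lemma Nw_ext {n} a (w w' : Heis n) : Aof w = Aof w' -> hz w = hz w' -> Nw a w = Nw a w'.
Proof. intros H1 H2; unfold Nw; rewrite H1, H2; reflexivity. Qed.

Lemma Nw_ext2 {n} a (w w' : Heis n) : Aof w = Aof w' -> hz w = - hz w' -> Nw a w = Nw a w'.
Proof. intros H1 H2; unfold Nw; rewrite H1, H2. f_equal. ring. Qed.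

Theorem mainTheorem2 :
  forall (n : nat), (1 <= n)%nat ->
  forall (a : R), 0 < a <= 2 ->
  homogeneous_distance n (d_alpha n a).
Proof.
  intros n _ a [Ha Ha2].
  split; [|split; [|split]].
  - split; [|split; [|split]].
    + intros p q. rewrite d_eq by lra. apply (Nf_nonneg a Ha); [apply Aof_nonneg|apply sq_nonneg].
    + intros p q. rewrite d_eq by lra. unfold Nw. rewrite (Nf_zero a Ha) by (apply Aof_nonneg || apply sq_nonneg).
      split.
      * intros [HA Hz].
        set (w := hmul (hinv p) q) in *.
        assert (H1: inner (hx w) (hx w) = 0).
        { unfold Aof in HA. pose proof (inner_pos _ (hx w)); pose proof (inner_pos _ (hy w)). lra. }
        assert (H2: inner (hy w) (hy w) = 0).
        { unfold Aof in HA. pose proof (inner_pos _ (hx w)); pose proof (inner_pos _ (hy w)). lra. }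
        assert (Hx: hx q = hx p).
        { apply functional_extensionality; intros j. pose proof (inner_zero _ (hx w) H1 j) as h.
          unfold w in h; cbn in h. lra. }
        assert (Hy: hy q = hy p).
        { apply functional_extensionality; intros j. pose proof (inner_zero _ (hy w) H2 j) as h.
          unfold w in h; cbn in h. lra. }
        assert (Hz0: hz w = 0) by (destruct (Req_dec (hz w) 0) as [h|h]; [exact h| apply (pow_nonzero _ 2) in h; contradiction]).
        unfold w in Hz0. cbn [hmul hinv hx hy hz] in Hz0. rewrite Hx, Hy in Hz0.
        rewrite !inner_oppl, (inner_sym _ (hy p) (hx p)) in Hz0.
        destruct p as [px py pz], q as [qx qy qz]; cbn in *. subst. f_equal. lra.
      * intros <-. split.
        -- unfold Aof. iexp. lra.
        -- assert (hz (hmul (hinv p) p) = 0) by (iexp; isym; lra). rewrite H. simpl; ring.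
    + intros p q. rewrite !d_eq by lra. apply Nw_ext2.
      * unfold Aof. iexp. lra.
      * iexp. isym. lra.
    + intros p q r. rewrite !d_eq by lra.
      rewrite (Nw_ext a (hmul (hinv p) r) (hmul (hmul (hinv p) q) (hmul (hinv q) r)))
        by (apply assoc_A || apply assoc_z).
      apply Nw_mul; auto.
  - intros U; split; intros HU p Hp.
    + destruct (HU p Hp) as [eps [He H]].
      destruct (topo_fwd n a p eps Ha He) as [eta [Het H']].
      exists eta; split; auto. intros q Hq. apply H. rewrite d_eq by lra. auto.
    + destruct (HU p Hp) as [eps [He H]].
      destruct (topo_bwd n a p eps Ha He) as [eta [Het H']].
      exists eta; split; auto. intros q Hq. apply H. rewrite d_eq in Hq by lra. auto.
  - intros p q q'. rewrite !d_eq by lra. apply Nw_ext.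
    + unfold Aof. iexp. lra.
    + iexp. isym. lra.
  - intros l p q Hl. rewrite !d_eq by lra. unfold Nw.
    assert (EA: Aof (hmul (hinv (dil l p)) (dil l q)) = l^2 * Aof (hmul (hinv p) q)).
    { unfold Aof. iexp. ring. }
    assert (EZ: hz (hmul (hinv (dil l p)) (dil l q)) ^ 2 = l^4 * hz (hmul (hinv p) q) ^ 2).
    { iexp. isym. ring. }
    rewrite EA, EZ. apply Nf_scale; auto; [apply Aof_nonneg|apply sq_nonneg].
Qed.
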